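(* Let $A=(V_\exists,V_\forall,E,E_f)$ be a fair game arena, $\alpha$ an $\omega$-regular winning condition over $V$, and $v\in V$. Then $$\exists s\in\Sigma^f.\,\forall t\in\Pi^f.\,\mathsf{play}_v(s,t)\in\alpha$$ holds if and only if $$\exists s\in\Sigma.\,\forall t\in\Pi.\,\mathsf{fair}_\exists(\mathsf{play}_v(s,t))\wedge\big(\mathsf{fair}_\forall(\mathsf{play}_v(s,t))\Rightarrow\mathsf{play}_v(s,t)\in\alpha\big)$$ holds.
   Context: A fair game arena $A=(V_\exists,V_\forall,E,E_f)$: finite node set $V=V_\exists\cup V_\forall$ (disjoint), right-total moves $E\subseteq V\times V$, fair moves $E_f\subseteq E$. A play is an infinite sequence $\tau=v_0v_1\ldots$ with $(v_j,v_{j+1})\in E$; $\tau_m$ is its sequence of moves; $\mathsf{Inf}$ denotes the set of elements occurring infinitely often. For $i\in\{\exists,\forall\}$, $\tau$ is $i$-fair ($\mathsf{fair}_i(\tau)$) if for all $u\in V_i\cap\mathsf{Inf}(\tau)$, every $(u,u')\in E_f$ is in $\mathsf{Inf}(\tau_m)$. A strategy for player $i$ is a function $p:V^*\cdot V_i\to V$ with $p(w\cdot u)\in E(u)$; $\Sigma$ ($\Pi$) is the set of strategies of $\exists$ ($\forall$); $\mathsf{play}_v(s,t)$ is the unique play from $v$ compliant with $s$ and $t$. A strategy is $i$-fair if every play it admits is $i$-fair; $\Sigma^f$, $\Pi^f$ are the sets of $\exists$-fair and $\forall$-fair strategies. An $\omega$-regular winning condition is an $\omega$-regular language $\alpha\subseteq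 V^\omega$. *)

(* Defs.v *)
From mathcomp Require Import all_boot.
Set Implicit Arguments. Unset Strict Implicit. Unset Printing Implicit Defensive.

Section Arena.
Variable V : finType.
(* Vex : membership in V_exists; V_forall is its complement. *)
Variable Vex : pred V.
Variables E Ef : rel V.

Inductive player := Exists | Forall.
Definition Vpl (i : player) : pred V :=
  match i with Exists => Vex | Forall => predC Vex end.

Definition fair_arena : Prop :=
  (forall u, exists u', E u u') /\ (forall u u', Ef u u' -> E u u').

Definition is_play (tau : nat -> V) : Prop := forall n, E (tau n) (tau n.+1).

Definition inf_often (tau : nat -> V) (u : V) : Prop :=
  forall N, exists2 n, N <= n & tau n = u.

Definition inf_often_move (tau : nat -> V) (u u' : V) : Prop :=
  forall N, exists2 n, N <= n & (tau n = u /\ tau n.+1 = u').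

Definition fair (i : player) (tau : nat -> V) : Prop :=
  forall u, Vpl i u -> inf_often tau u ->
    forall u', Ef u u' -> inf_often_move tau u u'.

(* A strategy for player i: a function on histories w.u (w : prefix, u : last
   node); only its values at u in V_i matter, where it must pick a successor. *)
Definition strategy := seq V -> V -> V.
Definition is_strategy (i : player) (p : strategy) : Prop :=
  forall w u, Vpl i u -> E u (p w u).

Definition prefix (tau : nat -> V) (n : nat) : seq V := [seq tau k | k <- iota 0 n].

Definition complies (i : player) (p : strategy) (tau : nat -> V) : Prop :=
  forall n, Vpl i (tau n) -> tau n.+1 = p (prefix tau n) (tau n).

Definition fair_strategy (i : player) (p : strategy) : Prop :=
  forall tau, is_play tau -> complies i p tau -> fair i tau.

Fixpoint play_hist (v : V) (s t : strategy) (n : nat) : seq V * V :=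
  match n with
  | 0 => ([::], v)
  | n'.+1 => let: (w, u) := play_hist v s t n' in
             (rcons w u, if Vex u then s w u else t w u)
  end.
Definition play (v : V) (s t : strategy) : nat -> V :=
  fun n => (play_hist v s t n).2.

End Arena.

Record buchi (A : finType) := Buchi {
  bstate : finType;
  binit : pred bstate;
  btrans : bstate -> A -> bstate -> bool;
  bacc : pred bstate }.

Definition buchi_accepts (A : finType) (B : buchi A) (w : nat -> A) : Prop :=
  exists r : nat -> bstate B,
    [/\ binit (r 0), (forall n, btrans (r n) (w n) (r n.+1))
      & forall N, exists2 n, N <= n & bacc (r n)].

Definition omega_regular (A : finType) (alpha : (nat -> A) -> Prop) : Prop :=
  exists B : buchi A, forall w, alpha w <-> buchi_accepts B w.

(* Main.v *)
Require Import Defs.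
From mathcomp Require Import all_boot zify.
From Stdlib Require Import Classical ClassicalEpsilon FunctionalExtensionality.
Set Implicit Arguments. Unset Strict Implicit. Unset Printing Implicit Defensive.

Definition succs (V : finType) (E : rel V) (u : V) : seq V := [seq x <- enum V | E u x].
Definition rr (V : finType) (E : rel V) (w : seq V) (u : V) : V :=
  nth u (succs E u) (count_mem u w %% size (succs E u)).

Lemma rr_valid (V : finType) (E : rel V) w u :
  (exists u', E u u') -> E u (rr E w u).
Proof.
case=> u' Hu'.
have inL : u' \in succs E u by rewrite mem_filter Hu' mem_enum.
have Hpos : 0 < size (succs E u) by case: (succs E u) inL.
have : rr E w u \in succs E u by rewrite mem_nth // ltn_mod.
by rewrite mem_filter => /andP [].
Qed.

Lemma prefixS (V : finType) (tau : nat -> V) n : Defs.prefix tau n.+1 = rcons (Defs.prefix tau n) (tau n).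
Proof. by rewrite /Defs.prefix -addn1 iotaD map_cat /= add0n cats1. Qed.

Lemma prefix_size (V : finType) (tau : nat -> V) n : size (Defs.prefix tau n) = n.
Proof. by rewrite size_map size_iota. Qed.

Lemma prefix_eq (V : finType) (tau tau' : nat -> V) n :
  (forall k, k < n -> tau k = tau' k) -> Defs.prefix tau n = Defs.prefix tau' n.
Proof. move=> H; apply/eq_in_map => k; rewrite mem_iota add0n => /andP [_ Hk]; exact: H. Qed.

Lemma prefix_nth (V : finType) (tau tau' : nat -> V) m k :
  Defs.prefix tau m = Defs.prefix tau' m -> k < m -> tau k = tau' k.
Proof.
move=> H Hk; have := congr1 (fun s => nth (tau 0) s k) H.
by rewrite /Defs.prefix !(nth_map 0) ?size_iota // nth_iota.
Qed.

Lemma hist1 (V : finType) (Vex : pred V) v s t n :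
  (play_hist Vex v s t n).1 = Defs.prefix (play Vex v s t) n.
Proof.
elim: n => [|n IH] //. rewrite prefixS -IH /play /=.
by case: (play_hist Vex v s t n).
Qed.

Lemma playS (V : finType) (Vex : pred V) v s t n :
  play Vex v s t n.+1 =
  if Vex (play Vex v s t n) then s (Defs.prefix (play Vex v s t) n) (play Vex v s t n)
  else t (Defs.prefix (play Vex v s t) n) (play Vex v s t n).
Proof. rewrite -hist1 /play /=; by case: (play_hist Vex v s t n). Qed.

Lemma rr_fair (V : finType) (Vex : pred V) (E Ef : rel V) i tau N0 :
  (forall u u', Ef u u' -> E u u') ->
  (forall m, N0 <= m -> Vpl Vex i (tau m) -> tau m.+1 = rr E (Defs.prefix tau m) (tau m)) ->
  fair Vex Ef i tau.
Proof.
move=> hEf hrr u Hu Hinf u' Hef N.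
set L := succs E u.
have inL : u' \in L by rewrite mem_filter (hEf _ _ Hef) mem_enum.
set k := index u' L.
have kL : k < size L by rewrite index_mem.
pose f := fun n => count_mem u (Defs.prefix tau n).
have fS : forall n, f n.+1 = f n + (tau n == u).
  by move=> n; rewrite /f prefixS -cats1 count_cat /= addn0.
have fmono : forall m d, f m <= f (m + d).
  by move=> m d; rewrite /f /Defs.prefix iotaD map_cat count_cat leq_addr.
set M := maxn N N0.
have funb : forall c, exists2 n, M <= n & c < f n.
  elim=> [|c [n Hn Hc]].
  - have [n Hn Hu'] := Hinf M. exists n.+1; first lia.
    by rewrite fS Hu' eqxx addn1.
  - have [m Hm Hmu] := Hinf n. exists m.+1; first lia.
    rewrite fS Hmu eqxx addn1 ltnS.
    have := fmono n (m - n). rewrite subnKC //. lia.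
set c := f M * size L + k.
have [j0 Hj0 Hcj0] := funb c.
have exP : exists j, (M <= j) && (c < f j.+1).
  by exists j0; apply/andP; split => //; have := fS j0; lia.
case: (ex_minnP exP) => j /andP [HMj Hcj] Hmin.
have Hfj : f j <= c.
  have [->|Hne] := eqVneq j M.
    rewrite /c; have := leq_pmulr (f M) (leq_ltn_trans (leq0n k) kL); lia.
  have Hj0' : 0 < j by lia.
  rewrite leqNgt; apply/negP => H; have := Hmin j.-1; rewrite prednK // H andbT.
  have H2 : M <= j.-1 by lia.
  move/(_ H2). lia.
have [Htj Hfj'] : tau j = u /\ f j = c.
  have := fS j. case: eqP => [->|_] /=; rewrite ?addn1 ?addn0 => H.
  - split => //; lia.
  - exfalso; lia.
exists j; first lia. split => //.
rewrite hrr //; last (by rewrite Htj); last lia.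
rewrite Htj /rr -/L.
change (count_mem u (Defs.prefix tau j)) with (f j).
by rewrite Hfj' /c modnMDl modn_small // nth_index.
Qed.

Lemma play_is_play (V : finType) (Vex : pred V) (E : rel V) v s t :
  is_strategy Vex E Exists s -> is_strategy Vex E Forall t -> is_play E (play Vex v s t).
Proof.
move=> Hs Ht n; rewrite playS; case: ifP => H; [apply: Hs | apply: Ht] => //=.
by rewrite H.
Qed.

Lemma play_comp_s (V : finType) (Vex : pred V) v s t :
  complies Vex Exists s (play Vex v s t).
Proof. by move=> n /= H; rewrite playS H. Qed.

Lemma play_comp_t (V : finType) (Vex : pred V) v s t :
  complies Vex Forall t (play Vex v s t).
Proof. by move=> n /= H; rewrite playS ifN. Qed.

Theorem lemma2 (V : finType) (Vex : pred V) (E Ef : rel V)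
    (alpha : (nat -> V) -> Prop) (v : V) :
  fair_arena E Ef ->
  omega_regular alpha ->
  (exists s, is_strategy Vex E Exists s /\ fair_strategy Vex E Ef Exists s /\
     forall t, is_strategy Vex E Forall t -> fair_strategy Vex E Ef Forall t ->
       alpha (play Vex v s t))
  <->
  (exists s, is_strategy Vex E Exists s /\
     forall t, is_strategy Vex E Forall t ->
       fair Vex Ef Exists (play Vex v s t) /\
       (fair Vex Ef Forall (play Vex v s t) -> alpha (play Vex v s t))).
Proof.
move=> [htot hEf] _; split.
- case=> s [Hs [Hsf Hall]]; exists s; split => // t Ht.
  set P := play Vex v s t.
  split; first by apply: Hsf; [exact: play_is_play | exact: play_comp_s].
  move=> HPf.
  pose t' : strategy V := fun w u =>
    if rcons w u == Defs.prefix P (size w).+1 then t w u else rr E w u.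
  have Ht' : is_strategy Vex E Forall t'.
    move=> w u Hu; rewrite /t'; case: ifP => _; [exact: Ht | exact: rr_valid].
  have Heq : play Vex v s t' = P.
    apply: functional_extensionality; elim/ltn_ind => [[|n] IH] //.
    rewrite [LHS]playS [RHS]playS (prefix_eq (fun k Hk => IH k (ltnW Hk))) IH //.
    case: ifP => // _; by rewrite /t' prefix_size -prefixS eqxx.
  rewrite -Heq; apply: Hall => // tau Htau Hc.
  case: (classic (forall n, tau n = P n)) => [Hall'|Hn].
    by have -> : tau = P by apply: functional_extensionality.
  have [n Hn'] := not_all_ex_not _ _ Hn.
  apply: (@rr_fair _ _ _ _ _ _ n hEf) => m Hm Hu.
  rewrite Hc // /t' ifF //; apply/negbTE/eqP => Heq'.
  rewrite prefix_size -prefixS in Heq'.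
  by apply: Hn'; apply: (@prefix_nth _ _ _ m.+1 n Heq'); rewrite ltnS.
- case=> s [Hs Hall].
  pose okh w u := exists t, is_strategy Vex E Forall t /\
                   rcons w u = Defs.prefix (play Vex v s t) (size w).+1.
  pose s' : strategy V := fun w u =>
    if excluded_middle_informative (okh w u) then s w u else rr E w u.
  have Hs' : is_strategy Vex E Exists s'.
    move=> w u Hu; rewrite /s'; destruct (excluded_middle_informative _) as [Hx|Hx];
      [exact: Hs | exact: rr_valid].
  have Heq : forall t, is_strategy Vex E Forall t -> play Vex v s' t = play Vex v s t.
    move=> t Ht; apply: functional_extensionality; elim/ltn_ind => [[|n] IH] //.
    rewrite [LHS]playS [RHS]playS (prefix_eq (fun k Hk => IH k (ltnW Hk))) IH //.
    case: ifP => // _; rewrite /s'; destruct (excluded_middle_informative _) as [Hy|Hno]; first done.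
    by exfalso; apply: Hno; exists t; split => //; rewrite prefix_size -prefixS.
  exists s'; split => //; split.
  + move=> tau Htau Hc.
    case: (classic (forall n, okh (Defs.prefix tau n) (tau n))) => [Hok|Hn].
    * pose t0 : strategy V := fun w u =>
        if rcons w u == Defs.prefix tau (size w).+1 then tau (size w).+1
        else odflt u [pick x | E u x].
      have Ht0 : is_strategy Vex E Forall t0.
        move=> w u _; rewrite /t0; case: eqP => [H|_].
          rewrite prefixS in H; have := congr1 (last u) H; rewrite !last_rcons => ->.
          exact: Htau.
        case: pickP => [x Hx|H0] //=.
        by have [u' Hu'] := htot u; rewrite H0 in Hu'.
      have Heq0 : play Vex v s t0 = tau.
        apply: functional_extensionality; elim/ltn_ind => [[|n] IH].
          have [t [_ H]] := Hok 0; by case: H.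
        rewrite playS (prefix_eq (fun k Hk => IH k (ltnW Hk))) IH //.
        case: ifP => Hv.
          rewrite Hc //= /s'; destruct (excluded_middle_informative _) as [Hy|Hno]; first done.
          by case: Hno; rewrite -(prefix_size tau n); apply: Hok.
        by rewrite /t0 prefix_size -prefixS eqxx.
      by rewrite -Heq0; exact: (Hall t0 Ht0).1.
    * have [n Hn'] := not_all_ex_not _ _ Hn.
      apply: (@rr_fair _ _ _ _ _ _ n hEf) => m Hm Hu.
      rewrite Hc // /s'; destruct (excluded_middle_informative _) as [Hok|Hy]; last done.
      exfalso; apply: Hn'.
      have [t [Ht H]] := Hok.
      exists t; split => //.
      rewrite prefix_size -prefixS in H; rewrite prefix_size -prefixS.
      apply: prefix_eq => k Hk; apply: (prefix_nth H); lia.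
  + move=> t Ht Htf; rewrite Heq //; apply: (Hall t Ht).2.
    apply: Htf; [exact: play_is_play | exact: play_comp_t].
Qed.
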